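(* Let $\beta>0$, $\beta_a>0$, $\alpha>0$ and $x_a\in[0,1]$, let $\Gamma=[0,x_a]\times[0,1-x_a]$, and consider the planar system \[ \frac{di_a}{dt}=F_a(i_a,i_r)\triangleq \beta(x_a-i_a)(i_a+i_r)-\beta_a(x_a-i_a)i_a-\alpha i_a, \qquad \frac{di_r}{dt}=F_r(i_a,i_r)\triangleq \beta(1-x_a-i_r)(i_a+i_r)-\beta_a(x_a-i_a)i_r-\alpha i_r . \] Let $\lambda_+\triangleq\beta-\beta_a x_a-\alpha$. If $\lambda_+\le 0$, then $(0,0)$ is the only isolated equilibrium of the system in $\Gamma$. Moreover, a unique interior equilibrium (a point of $(0,x_a)\times(0,1-x_a)$ at which $F_a=F_r=0$) exists if and only if $\lambda_+>0$.
   Context: An equilibrium is a point $\boldsymbol{i}\in\Gamma$ with $F_a(\boldsymbol{i})=F_r(\boldsymbol{i})=0$; the point $(0,0)$ is called the infection-free equilibrium. *)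

(* Defs.v *)
From Stdlib Require Import Reals Lra.
Open Scope R_scope.

Definition Fa (beta beta_a alpha x_a ia ir : R) : R :=
  beta * (x_a - ia) * (ia + ir) - beta_a * (x_a - ia) * ia - alpha * ia.

Definition Fr (beta beta_a alpha x_a ia ir : R) : R :=
  beta * (1 - x_a - ir) * (ia + ir) - beta_a * (x_a - ia) * ir - alpha * ir.

Definition in_Gamma (x_a ia ir : R) : Prop :=
  0 <= ia <= x_a /\ 0 <= ir <= 1 - x_a.

Definition in_interior (x_a ia ir : R) : Prop :=
  0 < ia < x_a /\ 0 < ir < 1 - x_a.

Definition equilibrium (beta beta_a alpha x_a ia ir : R) : Prop :=
  in_Gamma x_a ia ir /\
  Fa beta beta_a alpha x_a ia ir = 0 /\ Fr beta beta_a alpha x_a ia ir = 0.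

Definition isolated_equilibrium (beta beta_a alpha x_a ia ir : R) : Prop :=
  equilibrium beta beta_a alpha x_a ia ir /\
  exists eps : R, 0 < eps /\
    forall ja jr : R, equilibrium beta beta_a alpha x_a ja jr ->
      Rabs (ja - ia) < eps -> Rabs (jr - ir) < eps ->
      ja = ia /\ jr = ir.

Definition lambda_plus (beta beta_a alpha x_a : R) : R :=
  beta - beta_a * x_a - alpha.

(* Main.v *)
Require Import Defs.
From Stdlib Require Import Reals Lra Psatz.
Open Scope R_scope.

Lemma key (beta beta_a alpha x_a ia ir : R) :
  0 < beta -> 0 < ia + ir ->
  Fa beta beta_a alpha x_a ia ir = 0 -> Fr beta beta_a alpha x_a ia ir = 0 ->
  ia = x_a * (ia + ir) /\ ir = (1 - x_a) * (ia + ir) /\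
  (1 - (ia + ir)) * (beta - beta_a * x_a) = alpha.
Proof.
  intros Hb Hs HA HR. unfold Fa, Fr in *.
  set (s := ia + ir) in *.
  set (E := beta * (1 - s) - beta_a * (x_a - ia) - alpha).
  assert (HE : s * E = 0) by (unfold E, s in *; nra).
  assert (E0 : E = 0).
  { destruct (Rmult_integral _ _ HE); [lra|auto]. }
  assert (H1 : beta * (x_a * s - ia) + ia * E = 0) by (unfold E, s in *; nra).
  rewrite E0 in H1.
  assert (Hia : ia = x_a * s).
  { assert (beta * (x_a * s - ia) = 0) by lra.
    destruct (Rmult_integral _ _ H); lra. }
  assert (H2 : beta * ((1 - x_a) * s - ir) + ir * E = 0) by (unfold E, s in *; nra).
  rewrite E0 in H2.
  assert (Hir : ir = (1 - x_a) * s).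
  { assert (beta * ((1 - x_a) * s - ir) = 0) by lra.
    destruct (Rmult_integral _ _ H); lra. }
  split; [exact Hia|split; [exact Hir|]].
  unfold E in E0. rewrite Hia in E0. nra.
Qed.

Lemma only_zero (beta beta_a alpha x_a ia ir : R) :
  0 < beta -> 0 < alpha -> 0 <= x_a <= 1 ->
  lambda_plus beta beta_a alpha x_a <= 0 ->
  equilibrium beta beta_a alpha x_a ia ir -> ia = 0 /\ ir = 0.
Proof.
  intros Hb Ha Hx Hl [[G1 G2] [HA HR]]. unfold lambda_plus in Hl.
  destruct (Req_dec (ia + ir) 0) as [H0|H0]; [lra|].
  assert (Hs : 0 < ia + ir) by lra.
  destruct (key _ _ _ _ _ _ Hb Hs HA HR) as [_ [_ K]].
  set (s := ia + ir) in *.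
  assert (s <= 1) by (unfold s; lra).
  assert (beta - beta_a * x_a > 0).
  { destruct (Rle_lt_dec (beta - beta_a * x_a) 0); [|lra]. nra. }
  nra.
Qed.

Theorem lemma3 (beta beta_a alpha x_a : R)
  (Hbeta : 0 < beta) (Hbeta_a : 0 < beta_a) (Halpha : 0 < alpha)
  (Hxa : 0 <= x_a <= 1) :
  (lambda_plus beta beta_a alpha x_a <= 0 ->
     isolated_equilibrium beta beta_a alpha x_a 0 0 /\
     (forall ia ir : R, isolated_equilibrium beta beta_a alpha x_a ia ir ->
        ia = 0 /\ ir = 0)) /\
  (0 < x_a < 1 ->
     ((exists ia ir : R, in_interior x_a ia ir /\
          Fa beta beta_a alpha x_a ia ir = 0 /\ Fr beta beta_a alpha x_a ia ir = 0 /\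
          (forall ja jr : R, in_interior x_a ja jr ->
             Fa beta beta_a alpha x_a ja jr = 0 -> Fr beta beta_a alpha x_a ja jr = 0 ->
             ja = ia /\ jr = ir))
      <-> 0 < lambda_plus beta beta_a alpha x_a)).
Proof.
  split.
  - intros Hl. split.
    + split.
      * unfold equilibrium, in_Gamma, Fa, Fr. repeat split; try lra; ring.
      * exists 1. split; [lra|]. intros ja jr Heq _ _.
        destruct (only_zero _ _ _ _ _ _ Hbeta Halpha Hxa Hl Heq). lra.
    + intros ia ir [Heq _]. exact (only_zero _ _ _ _ _ _ Hbeta Halpha Hxa Hl Heq).
  - intros Hx. unfold lambda_plus. split.
    + intros [ia [ir [[I1 I2] [HA [HR _]]]]].
      assert (Hs : 0 < ia + ir) by lra.
      destruct (key _ _ _ _ _ _ Hbeta Hs HA HR) as [_ [_ K]].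
      set (s := ia + ir) in *.
      assert (s < 1) by (unfold s; lra).
      assert (beta - beta_a * x_a > 0).
      { destruct (Rle_lt_dec (beta - beta_a * x_a) 0); [|lra]. nra. }
      nra.
    + intros Hl.
      set (K := beta - beta_a * x_a).
      assert (HK : K > alpha) by (unfold K; lra).
      set (s := 1 - alpha / K).
      assert (Hs0 : 0 < s).
      { unfold s. assert (alpha / K < 1).
        { apply (Rmult_lt_reg_r K); [lra|]. unfold Rdiv. rewrite Rmult_assoc, Rinv_l; lra. }
        lra. }
      assert (Hs1 : s < 1).
      { unfold s. assert (0 < alpha / K) by (apply Rdiv_lt_0_compat; lra). lra. }
      assert (HsK : (1 - s) * K = alpha) by (unfold s; field; lra).
      exists (x_a * s), ((1 - x_a) * s).
      split; [unfold in_interior; split; split; nra|].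
      split; [unfold Fa; fold K in HsK; unfold K in HsK; nra|].
      split; [unfold Fr; unfold K in HsK; nra|].
      intros ja jr [[J1 J2] [J3 J4]] HA HR.
      assert (Hs : 0 < ja + jr) by lra.
      destruct (key _ _ _ _ _ _ Hbeta Hs HA HR) as [E1 [E2 K2]].
      fold K in K2.
      assert (ja + jr = s).
      { assert ((s - (ja + jr)) * K = 0) by lra.
        destruct (Rmult_integral _ _ H); lra. }
      rewrite H in E1, E2. lra.
Qed.
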